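(* For every three-qubit state $\rho_{ABC}$, $$S^{\max}(\rho_{ABC})+2\,\tau(\rho_{ABC})\le 3,$$ where $S^{\max}(\rho_{ABC})=\max\{S_{AB},S_{AC},S_{BC}\}$.
   Context: For a two-qubit state $\rho$ let $t_{kl}=\mathrm{Tr}[\rho\,\sigma_k\otimes\sigma_l]$ ($\sigma_k$ Pauli matrices) and $S(\rho)=\sum_{k,l=1}^3 t_{kl}^2$; $S_{ij}=S(\rho_{ij})$ for the two-qubit reduced states $\rho_{ij}$ of $\rho_{ABC}$. $\tau$ is the three-tangle: for a pure state, $\tau=1-|\vec a|^2-\mathcal C_{AB}^2-\mathcal C_{AC}^2$, where $\vec a$ with $a_k=\mathrm{Tr}[\rho_A\sigma_k]$ is the Bloch vector of qubit $A$ and $\mathcal C_{ij}$ is the Wootters concurrence of $\rho_{ij}$ ($\mathcal C(\rho)=\max\{0,\lambda_1-\lambda_2-\lambda_3-\lambda_4\}$, $\lambda_i$ the decreasingly ordered square roots of the eigenvalues of $\rho(\sigma_2\otimes\sigma_2)\rho^*(\sigma_2\otimes\sigma_2)$); for a mixed state $\tau$ is the convex roof, i.e. the minimum of $\sum_n p_n\tau(\psi_n)$ over pure-state decompositions $\rho=\sum_n p_n|\psi_n\rangle\langle\psi_n|$. *)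

(* Defs.v *)
From HB Require Import structures.
From mathcomp Require Import all_boot all_order all_algebra.
From mathcomp Require Import boolp classical_sets reals.
From mathcomp Require Import complex.
Set Implicit Arguments. Unset Strict Implicit. Unset Printing Implicit Defensive.
Import Order.TTheory GRing.Theory Num.Theory.
Local Open Scope ring_scope.

Section QuantumDefs.
Variable R : realType.
Local Notation C := R[i].

Definition adjmx m n (A : 'M[C]_(m, n)) : 'M[C]_(n, m) := map_mx Num.conj A^T.
Definition conjmx m n (A : 'M[C]_(m, n)) : 'M[C]_(m, n) := map_mx Num.conj A.

(** Pauli matrices sigma_1, sigma_2, sigma_3 (k : 'I_3 encodes k+1). *)
Definition pauli (k : 'I_3) : 'M[C]_2 :=
  \matrix_(i < 2, j < 2)
    match val k with
    | 0%N => if i == j then 0 else 1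
    | 1%N => if i == j then 0 else (if (val i == 0%N) then - 'i%C else 'i%C)
    | _ => if i == j then (if val i == 0%N then 1 else -1) else 0
    end.

(** Computational basis encoding: two qubits |a b> ~ 2a+b,
    three qubits |a b c> ~ 4a+2b+c. *)
Definition enc2 (a b : 'I_2) : 'I_4 := inord (2 * a + b).
Definition enc3 (a b c : 'I_2) : 'I_8 := inord (4 * a + 2 * b + c).
Definition hi2 (i : 'I_4) : 'I_2 := inord (i %/ 2).
Definition lo2 (i : 'I_4) : 'I_2 := inord (i %% 2).

Definition kron2 (A B : 'M[C]_2) : 'M[C]_4 :=
  \matrix_(i, j) (A (hi2 i) (hi2 j) * B (lo2 i) (lo2 j)).

(** Partial traces of a three-qubit operator (qubits ordered A,B,C). *)
Definition rhoAB (rho : 'M[C]_8) : 'M[C]_4 :=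
  \matrix_(i, j) \sum_(c < 2) rho (enc3 (hi2 i) (lo2 i) c) (enc3 (hi2 j) (lo2 j) c).
Definition rhoAC (rho : 'M[C]_8) : 'M[C]_4 :=
  \matrix_(i, j) \sum_(b < 2) rho (enc3 (hi2 i) b (lo2 i)) (enc3 (hi2 j) b (lo2 j)).
Definition rhoBC (rho : 'M[C]_8) : 'M[C]_4 :=
  \matrix_(i, j) \sum_(a < 2) rho (enc3 a (hi2 i) (lo2 i)) (enc3 a (hi2 j) (lo2 j)).
Definition rhoA (rho : 'M[C]_8) : 'M[C]_2 :=
  \matrix_(a, a') \sum_(b < 2) \sum_(c < 2) rho (enc3 a b c) (enc3 a' b c).

(** Correlation tensor t_kl = Tr[rho sigma_k (x) sigma_l] (real for
    Hermitian rho; we take its real part) and S(rho) = sum_kl t_kl^2. *)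
Definition tcorr (rho : 'M[C]_4) (k l : 'I_3) : R :=
  complex.Re (\tr (rho *m kron2 (pauli k) (pauli l))).
Definition Scorr (rho : 'M[C]_4) : R :=
  \sum_(k < 3) \sum_(l < 3) tcorr rho k l ^+ 2.

Definition sigma2 : 'I_3 := inord 1.
Definition wootters_mx (rho : 'M[C]_4) : 'M[C]_4 :=
  rho *m kron2 (pauli sigma2) (pauli sigma2) *m conjmx rho
      *m kron2 (pauli sigma2) (pauli sigma2).

Definition wootters_lambdas_spec (M : 'M[C]_4) (s : seq R) : Prop :=
  [/\ size s = 4%N, all (fun x => 0 <= x) s, sorted (fun x y => y <= x) s
    & char_poly M = \prod_(x <- s) ('X - ((x ^+ 2)%:C)%C%:P)].

Definition wootters_lambdas (rho : 'M[C]_4) : seq R :=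
  xget [::] (wootters_lambdas_spec (wootters_mx rho)).

Definition concurrence (rho : 'M[C]_4) : R :=
  let s := wootters_lambdas rho in
  Num.max 0 (s`_0 - s`_1 - s`_2 - s`_3).

Definition psd n (A : 'M[C]_n) : Prop :=
  forall v : 'cV[C]_n, 0 <= (adjmx v *m A *m v) 0 0.
Definition is_state n (rho : 'M[C]_n) : Prop := psd rho /\ \tr rho = 1.

Definition unit_vec n (psi : 'cV[C]_n) : Prop := (adjmx psi *m psi) 0 0 = 1.
Definition proj (psi : 'cV[C]_8) : 'M[C]_8 := psi *m adjmx psi.

Definition bloch (rho : 'M[C]_8) (k : 'I_3) : R :=
  complex.Re (\tr (rhoA rho *m pauli k)).

Definition tau_pure (psi : 'cV[C]_8) : R :=
  let rho := proj psi in
  1 - \sum_(k < 3) bloch rho k ^+ 2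
    - concurrence (rhoAB rho) ^+ 2 - concurrence (rhoAC rho) ^+ 2.

Definition decomposition (rho : 'M[C]_8) n (p : 'I_n -> R) (psi : 'I_n -> 'cV[C]_8)
  : Prop :=
  [/\ forall i, 0 <= p i, \sum_(i < n) p i = 1, forall i, unit_vec (psi i)
    & rho = \sum_(i < n) (p i)%:C%C *: proj (psi i)].

Definition tau (rho : 'M[C]_8) : R :=
  inf [set x : R | exists n (p : 'I_n -> R) (psi : 'I_n -> 'cV[C]_8),
         decomposition rho p psi /\ x = \sum_(i < n) p i * tau_pure (psi i)].

Definition Smax (rho : 'M[C]_8) : R :=
  Num.max (Scorr (rhoAB rho)) (Num.max (Scorr (rhoAC rho)) (Scorr (rhoBC rho))).

End QuantumDefs.

(* Main.v *)
Require Import Defs.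
From HB Require Import structures.
From mathcomp Require Import all_boot all_order all_algebra.
From mathcomp Require Import boolp classical_sets reals.
From mathcomp Require Import complex.
From mathcomp Require Import ring lra.
Import Order.TTheory GRing.Theory Num.Theory.
Local Open Scope ring_scope.
Local Notation Re := complex.Re.
Local Notation Im := complex.Im.

Notation i0 := (@ord0 1).
Definition i1 : 'I_2 := @Ordinal 2 1 isT.
Notation k0 := (@ord0 2).
Definition k1 : 'I_3 := @Ordinal 3 1 isT.
Definition k2 : 'I_3 := @Ordinal 3 2 isT.


Lemma sum2 (V : nmodType) (F : 'I_2 -> V) : \sum_(i < 2) F i = F i0 + F i1.
Proof. by rewrite big_ord_recl big_ord1; congr (_ + F _); apply: val_inj. Qed.
Lemma sum3 (V : nmodType) (F : 'I_3 -> V) : \sum_(i < 3) F i = F k0 + F k1 + F k2.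
Proof. by rewrite !big_ord_recl big_ord0 addr0 addrA; congr (_ + F _ + F _); apply: val_inj. Qed.
Lemma sum4 (V : nmodType) (F : 'I_4 -> V) : \sum_(i < 4) F i =
  F (enc2 i0 i0) + F (enc2 i0 i1) + F (enc2 i1 i0) + F (enc2 i1 i1).
Proof.
rewrite !big_ord_recl big_ord0 addr0 !addrA.
by congr (F _ + F _ + F _ + F _); apply: val_inj; rewrite /= inordK.
Qed.
Lemma sum8 (V : nmodType) (F : 'I_8 -> V) : \sum_(i < 8) F i =
  F (enc3 i0 i0 i0) + F (enc3 i0 i0 i1) + F (enc3 i0 i1 i0) + F (enc3 i0 i1 i1) +
  F (enc3 i1 i0 i0) + F (enc3 i1 i0 i1) + F (enc3 i1 i1 i0) + F (enc3 i1 i1 i1).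
Proof.
rewrite !big_ord_recl big_ord0 addr0 !addrA.
by congr (F _ + F _ + F _ + F _ + F _ + F _ + F _ + F _); apply: val_inj; rewrite /= inordK.
Qed.
Lemma hi2_00 : hi2 (enc2 i0 i0) = i0. Proof. by apply: val_inj; rewrite /= !inordK. Qed.
Lemma hi2_01 : hi2 (enc2 i0 i1) = i0. Proof. by apply: val_inj; rewrite /= !inordK. Qed.
Lemma hi2_10 : hi2 (enc2 i1 i0) = i1. Proof. by apply: val_inj; rewrite /= !inordK. Qed.
Lemma hi2_11 : hi2 (enc2 i1 i1) = i1. Proof. by apply: val_inj; rewrite /= !inordK. Qed.
Lemma lo2_00 : lo2 (enc2 i0 i0) = i0. Proof. by apply: val_inj; rewrite /= !inordK. Qed.
Lemma lo2_01 : lo2 (enc2 i0 i1) = i1. Proof. by apply: val_inj; rewrite /= !inordK. Qed.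
Lemma lo2_10 : lo2 (enc2 i1 i0) = i0. Proof. by apply: val_inj; rewrite /= !inordK. Qed.
Lemma lo2_11 : lo2 (enc2 i1 i1) = i1. Proof. by apply: val_inj; rewrite /= !inordK. Qed.
Definition hilo := (hi2_00, hi2_01, hi2_10, hi2_11, lo2_00, lo2_01, lo2_10, lo2_11).

Section ReIm.
Variable R : realType.
Implicit Types x y : R[i].
Lemma cReD x y : Re (x + y) = Re x + Re y. Proof. by case: x => a b; case: y => c d; simpc. Qed.
Lemma cImD x y : Im (x + y) = Im x + Im y. Proof. by case: x => a b; case: y => c d; simpc. Qed.
Lemma cReN x : Re (- x) = - Re x. Proof. by case: x => a b; simpc. Qed.
Lemma cImN x : Im (- x) = - Im x. Proof. by case: x => a b; simpc. Qed.
Lemma cReM x y : Re (x * y) = Re x * Re y - Im x * Im y. Proof. by case: x => a b; case: y => c d; simpc. Qed.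
Lemma cImM x y : Im (x * y) = Re x * Im y + Im x * Re y.
Proof. by case: x => a b; case: y => c d; simpc; rewrite addrC. Qed.
Lemma cReJ x : Re (Num.conj x) = Re x. Proof. by case: x => a b; simpc. Qed.
Lemma cImJ x : Im (Num.conj x) = - Im x. Proof. by case: x => a b; simpc. Qed.
Lemma cRei : Re ('i%C : R[i]) = 0. Proof. by []. Qed.
Lemma cImi : Im ('i%C : R[i]) = 1. Proof. by []. Qed.
Lemma cRe0 : Re (0 : R[i]) = 0. Proof. by []. Qed.
Lemma cIm0 : Im (0 : R[i]) = 0. Proof. by []. Qed.
Lemma cRe1 : Re (1 : R[i]) = 1. Proof. by []. Qed.
Lemma cIm1 : Im (1 : R[i]) = 0. Proof. by []. Qed.
Lemma cReR (r : R) : Re (r%:C)%C = r. Proof. by []. Qed.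
Lemma cImR (r : R) : Im (r%:C)%C = 0. Proof. by []. Qed.
End ReIm.
Definition ReIm := (cReD, cImD, cReN, cImN, cReM, cImM, cReJ, cImJ, cRei, cImi, cRe0, cIm0, cRe1, cIm1, cReR, cImR).

Lemma trmulE (T : comPzRingType) n (A B : 'M[T]_n) :
  \tr (A *m B) = \sum_i \sum_j A i j * B j i.
Proof. by apply: eq_bigr => i _; rewrite mxE. Qed.

Set Implicit Arguments. Unset Strict Implicit.

Lemma hi2_enc2 a b : hi2 (enc2 a b) = a.
Proof.
apply: val_inj; case: a => [[|[|//]] ?]; case: b => [[|[|//]] ?];
by rewrite /hi2 /enc2 /= !inordK.
Qed.
Lemma lo2_enc2 a b : lo2 (enc2 a b) = b.
Proof.
apply: val_inj; case: a => [[|[|//]] ?]; case: b => [[|[|//]] ?];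
by rewrite /lo2 /enc2 /= !inordK.
Qed.
Lemma sigma2E : sigma2 = k1. Proof. by apply: val_inj; rewrite /= inordK. Qed.

Section Pure.
Variable R : realType.
Local Notation C := R[i].

Definition preal (k : 'I_3) (a b : 'I_2) : R :=
  match val k with
  | 0%N => if a == b then 0 else 1
  | 1%N => 0
  | _ => if a == b then (if val a == 0%N then 1 else -1) else 0 end.
Definition pimag (k : 'I_3) (a b : 'I_2) : R :=
  match val k with
  | 1%N => if a == b then 0 else (if val a == 0%N then -1 else 1)
  | _ => 0 end.

Lemma Re_pauli k a b : Re (pauli R k a b) = preal k a b.
Proof.
rewrite mxE /preal; case: k => [[|[|[|//]]] ?] /=; case: (a == b) => //=;
by case: ifP => _ /=; rewrite ?oppr0.
Qed.
Lemma Im_pauli k a b : Im (pauli R k a b) = pimag k a b.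
Proof.
rewrite mxE /pimag; case: k => [[|[|[|//]]] ?] /=; case: (a == b) => /=; rewrite ?oppr0 //;
by case: ifP => _ /=; rewrite ?oppr0.
Qed.

Lemma kron2E (A B : 'M[C]_2) a b a' b' :
  kron2 A B (enc2 a b) (enc2 a' b') = A a a' * B b b'.
Proof. by rewrite mxE !hi2_enc2 !lo2_enc2. Qed.

Lemma tcorr_gen (rho : 'M[C]_4) k l : tcorr rho k l =
  \sum_a \sum_b \sum_a' \sum_b'
   (Re (rho (enc2 a b) (enc2 a' b')) *
       (preal k a' a * preal l b' b - pimag k a' a * pimag l b' b)
    - Im (rho (enc2 a b) (enc2 a' b')) *
       (preal k a' a * pimag l b' b + pimag k a' a * preal l b' b)).
Proof.
rewrite /tcorr trmulE sum4 !sum2 !sum4 !kron2E !cReD.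
rewrite !cReM !cImM !Re_pauli !Im_pauli.
ring.
Qed.
Lemma tc_00 (rho : 'M[R[i]]_4) : tcorr rho k0 k0 = Re (rho (enc2 i0 i0) (enc2 i1 i1)) + Re (rho (enc2 i0 i1) (enc2 i1 i0)) + Re (rho (enc2 i1 i0) (enc2 i0 i1)) + Re (rho (enc2 i1 i1) (enc2 i0 i0)).
Proof. by rewrite tcorr_gen !sum2 /preal /pimag /=; ring. Qed.
Lemma tc_01 (rho : 'M[R[i]]_4) : tcorr rho k0 k1 = - Im (rho (enc2 i0 i0) (enc2 i1 i1)) + Im (rho (enc2 i0 i1) (enc2 i1 i0)) - Im (rho (enc2 i1 i0) (enc2 i0 i1)) + Im (rho (enc2 i1 i1) (enc2 i0 i0)).
Proof. by rewrite tcorr_gen !sum2 /preal /pimag /=; ring. Qed.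
Lemma tc_02 (rho : 'M[R[i]]_4) : tcorr rho k0 k2 = Re (rho (enc2 i0 i0) (enc2 i1 i0)) - Re (rho (enc2 i0 i1) (enc2 i1 i1)) + Re (rho (enc2 i1 i0) (enc2 i0 i0)) - Re (rho (enc2 i1 i1) (enc2 i0 i1)).
Proof. by rewrite tcorr_gen !sum2 /preal /pimag /=; ring. Qed.
Lemma tc_10 (rho : 'M[R[i]]_4) : tcorr rho k1 k0 = - Im (rho (enc2 i0 i0) (enc2 i1 i1)) - Im (rho (enc2 i0 i1) (enc2 i1 i0)) + Im (rho (enc2 i1 i0) (enc2 i0 i1)) + Im (rho (enc2 i1 i1) (enc2 i0 i0)).
Proof. by rewrite tcorr_gen !sum2 /preal /pimag /=; ring. Qed.
Lemma tc_11 (rho : 'M[R[i]]_4) : tcorr rho k1 k1 = - Re (rho (enc2 i0 i0) (enc2 i1 i1)) + Re (rho (enc2 i0 i1) (enc2 i1 i0)) + Re (rho (enc2 i1 i0) (enc2 i0 i1)) - Re (rho (enc2 i1 i1) (enc2 i0 i0)).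
Proof. by rewrite tcorr_gen !sum2 /preal /pimag /=; ring. Qed.
Lemma tc_12 (rho : 'M[R[i]]_4) : tcorr rho k1 k2 = - Im (rho (enc2 i0 i0) (enc2 i1 i0)) + Im (rho (enc2 i0 i1) (enc2 i1 i1)) + Im (rho (enc2 i1 i0) (enc2 i0 i0)) - Im (rho (enc2 i1 i1) (enc2 i0 i1)).
Proof. by rewrite tcorr_gen !sum2 /preal /pimag /=; ring. Qed.
Lemma tc_20 (rho : 'M[R[i]]_4) : tcorr rho k2 k0 = Re (rho (enc2 i0 i0) (enc2 i0 i1)) + Re (rho (enc2 i0 i1) (enc2 i0 i0)) - Re (rho (enc2 i1 i0) (enc2 i1 i1)) - Re (rho (enc2 i1 i1) (enc2 i1 i0)).
Proof. by rewrite tcorr_gen !sum2 /preal /pimag /=; ring. Qed.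
Lemma tc_21 (rho : 'M[R[i]]_4) : tcorr rho k2 k1 = - Im (rho (enc2 i0 i0) (enc2 i0 i1)) + Im (rho (enc2 i0 i1) (enc2 i0 i0)) + Im (rho (enc2 i1 i0) (enc2 i1 i1)) - Im (rho (enc2 i1 i1) (enc2 i1 i0)).
Proof. by rewrite tcorr_gen !sum2 /preal /pimag /=; ring. Qed.
Lemma tc_22 (rho : 'M[R[i]]_4) : tcorr rho k2 k2 = Re (rho (enc2 i0 i0) (enc2 i0 i0)) - Re (rho (enc2 i0 i1) (enc2 i0 i1)) - Re (rho (enc2 i1 i0) (enc2 i1 i0)) + Re (rho (enc2 i1 i1) (enc2 i1 i1)).
Proof. by rewrite tcorr_gen !sum2 /preal /pimag /=; ring. Qed.
Definition tcE := (tc_00, tc_01, tc_02, tc_10, tc_11, tc_12, tc_20, tc_21, tc_22).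
End Pure.

Set Implicit Arguments. Unset Strict Implicit.

Section Pure2.
Variable R : realType.
Local Notation C := R[i].

Definition nsq (z : C) : R := Re z ^+ 2 + Im z ^+ 2.
Definition Kmat : 'M[C]_4 := kron2 (pauli R sigma2) (pauli R sigma2).
Definition Pmat (V : 'M[C]_(4,2)) : 'M[C]_2 := V^T *m Kmat *m V.
Definition Tval (P : 'M[C]_2) : R := \sum_c \sum_d nsq (P c d).
Definition VAB (psi : 'cV[C]_8) : 'M[C]_(4,2) := \matrix_(i, c) psi (enc3 (hi2 i) (lo2 i) c) 0.
Definition VAC (psi : 'cV[C]_8) : 'M[C]_(4,2) := \matrix_(i, c) psi (enc3 (hi2 i) c (lo2 i)) 0.
Definition VBC (psi : 'cV[C]_8) : 'M[C]_(4,2) := \matrix_(i, c) psi (enc3 c (hi2 i) (lo2 i)) 0.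
Definition Nval (psi : 'cV[C]_8) : R := \sum_i nsq (psi i 0).
Definition xr (psi : 'cV[C]_8) a b c : R := Re (psi (enc3 a b c) 0).
Definition yi (psi : 'cV[C]_8) a b c : R := Im (psi (enc3 a b c) 0).

Lemma proj_entry (psi : 'cV[C]_8) i j : proj psi i j = psi i 0 * Num.conj (psi j 0).
Proof. by rewrite !mxE big_ord1 !mxE. Qed.

Lemma rhoAB_re (psi : 'cV[C]_8) a b a' b' : Re (rhoAB (proj psi) (enc2 a b) (enc2 a' b')) =
  xr psi a b i0 * xr psi a' b' i0 + yi psi a b i0 * yi psi a' b' i0 +
  (xr psi a b i1 * xr psi a' b' i1 + yi psi a b i1 * yi psi a' b' i1).
Proof. by rewrite mxE !hi2_enc2 !lo2_enc2 sum2 !proj_entry !ReIm /xr /yi; ring. Qed.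
Lemma rhoAB_im (psi : 'cV[C]_8) a b a' b' : Im (rhoAB (proj psi) (enc2 a b) (enc2 a' b')) =
  yi psi a b i0 * xr psi a' b' i0 - xr psi a b i0 * yi psi a' b' i0 +
  (yi psi a b i1 * xr psi a' b' i1 - xr psi a b i1 * yi psi a' b' i1).
Proof. by rewrite mxE !hi2_enc2 !lo2_enc2 sum2 !proj_entry !ReIm /xr /yi; ring. Qed.
Lemma rhoAC_re (psi : 'cV[C]_8) a c a' c' : Re (rhoAC (proj psi) (enc2 a c) (enc2 a' c')) =
  xr psi a i0 c * xr psi a' i0 c' + yi psi a i0 c * yi psi a' i0 c' +
  (xr psi a i1 c * xr psi a' i1 c' + yi psi a i1 c * yi psi a' i1 c').
Proof. by rewrite mxE !hi2_enc2 !lo2_enc2 sum2 !proj_entry !ReIm /xr /yi; ring. Qed.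
Lemma rhoAC_im (psi : 'cV[C]_8) a c a' c' : Im (rhoAC (proj psi) (enc2 a c) (enc2 a' c')) =
  yi psi a i0 c * xr psi a' i0 c' - xr psi a i0 c * yi psi a' i0 c' +
  (yi psi a i1 c * xr psi a' i1 c' - xr psi a i1 c * yi psi a' i1 c').
Proof. by rewrite mxE !hi2_enc2 !lo2_enc2 sum2 !proj_entry !ReIm /xr /yi; ring. Qed.
Lemma rhoBC_re (psi : 'cV[C]_8) b c b' c' : Re (rhoBC (proj psi) (enc2 b c) (enc2 b' c')) =
  xr psi i0 b c * xr psi i0 b' c' + yi psi i0 b c * yi psi i0 b' c' +
  (xr psi i1 b c * xr psi i1 b' c' + yi psi i1 b c * yi psi i1 b' c').
Proof. by rewrite mxE !hi2_enc2 !lo2_enc2 sum2 !proj_entry !ReIm /xr /yi; ring. Qed.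
Lemma rhoBC_im (psi : 'cV[C]_8) b c b' c' : Im (rhoBC (proj psi) (enc2 b c) (enc2 b' c')) =
  yi psi i0 b c * xr psi i0 b' c' - xr psi i0 b c * yi psi i0 b' c' +
  (yi psi i1 b c * xr psi i1 b' c' - xr psi i1 b c * yi psi i1 b' c').
Proof. by rewrite mxE !hi2_enc2 !lo2_enc2 sum2 !proj_entry !ReIm /xr /yi; ring. Qed.

Definition ky (a a' : 'I_2) : C := if a == a' then 0 else if val a == 0%N then -1 else 1.
Lemma ii : ('i%C * 'i%C : C) = -1.
Proof. by apply/eqP; rewrite eq_complex /= !(mul0r, mulr0, mulr1, mul1r, add0r, addr0, sub0r, oppr0) !eqxx. Qed.
Lemma pauliY a a' : pauli R k1 a a' = 'i%C * ky a a'.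
Proof.
rewrite mxE /ky /=; case: (a == a'); first by rewrite mulr0.
by case: ifP => _; rewrite ?mulrN1 ?mulr1.
Qed.
Lemma KmatE a b a' b' : Kmat (enc2 a b) (enc2 a' b') = - (ky a a' * ky b b').
Proof. by rewrite /Kmat sigma2E kron2E !pauliY mulrACA ii mulN1r. Qed.
Lemma Pmat_E (V : 'M[C]_(4,2)) c d : Pmat V c d =
  - (V (enc2 i0 i0) c * V (enc2 i1 i1) d) + V (enc2 i0 i1) c * V (enc2 i1 i0) d
  + V (enc2 i1 i0) c * V (enc2 i0 i1) d - V (enc2 i1 i1) c * V (enc2 i0 i0) d.
Proof. rewrite /Pmat; move: Kmat KmatE => K KE; rewrite !(mxE, sum4) !KE /ky /=; ring. Qed.
Lemma VABE psi a b c : VAB psi (enc2 a b) c = psi (enc3 a b c) 0.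
Proof. by rewrite mxE hi2_enc2 lo2_enc2. Qed.
Lemma VACE psi a c b : VAC psi (enc2 a c) b = psi (enc3 a b c) 0.
Proof. by rewrite mxE hi2_enc2 lo2_enc2. Qed.
Lemma VBCE psi b c a : VBC psi (enc2 b c) a = psi (enc3 a b c) 0.
Proof. by rewrite mxE hi2_enc2 lo2_enc2. Qed.
Lemma PAB_re psi c d : Re (Pmat (VAB psi) c d) = - (xr psi i0 i0 c * xr psi i1 i1 d - yi psi i0 i0 c * yi psi i1 i1 d) + (xr psi i0 i1 c * xr psi i1 i0 d - yi psi i0 i1 c * yi psi i1 i0 d) + (xr psi i1 i0 c * xr psi i0 i1 d - yi psi i1 i0 c * yi psi i0 i1 d) - (xr psi i1 i1 c * xr psi i0 i0 d - yi psi i1 i1 c * yi psi i0 i0 d).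
Proof. by rewrite Pmat_E !VABE !ReIm /xr /yi; ring. Qed.
Lemma PAB_im psi c d : Im (Pmat (VAB psi) c d) = - (xr psi i0 i0 c * yi psi i1 i1 d + yi psi i0 i0 c * xr psi i1 i1 d) + (xr psi i0 i1 c * yi psi i1 i0 d + yi psi i0 i1 c * xr psi i1 i0 d) + (xr psi i1 i0 c * yi psi i0 i1 d + yi psi i1 i0 c * xr psi i0 i1 d) - (xr psi i1 i1 c * yi psi i0 i0 d + yi psi i1 i1 c * xr psi i0 i0 d).
Proof. by rewrite Pmat_E !VABE !ReIm /xr /yi; ring. Qed.
Lemma PAC_re psi c d : Re (Pmat (VAC psi) c d) = - (xr psi i0 c i0 * xr psi i1 d i1 - yi psi i0 c i0 * yi psi i1 d i1) + (xr psi i0 c i1 * xr psi i1 d i0 - yi psi i0 c i1 * yi psi i1 d i0) + (xr psi i1 c i0 * xr psi i0 d i1 - yi psi i1 c i0 * yi psi i0 d i1) - (xr psi i1 c i1 * xr psi i0 d i0 - yi psi i1 c i1 * yi psi i0 d i0).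
Proof. by rewrite Pmat_E !VACE !ReIm /xr /yi; ring. Qed.
Lemma PAC_im psi c d : Im (Pmat (VAC psi) c d) = - (xr psi i0 c i0 * yi psi i1 d i1 + yi psi i0 c i0 * xr psi i1 d i1) + (xr psi i0 c i1 * yi psi i1 d i0 + yi psi i0 c i1 * xr psi i1 d i0) + (xr psi i1 c i0 * yi psi i0 d i1 + yi psi i1 c i0 * xr psi i0 d i1) - (xr psi i1 c i1 * yi psi i0 d i0 + yi psi i1 c i1 * xr psi i0 d i0).
Proof. by rewrite Pmat_E !VACE !ReIm /xr /yi; ring. Qed.
Lemma PBC_re psi c d : Re (Pmat (VBC psi) c d) = - (xr psi c i0 i0 * xr psi d i1 i1 - yi psi c i0 i0 * yi psi d i1 i1) + (xr psi c i0 i1 * xr psi d i1 i0 - yi psi c i0 i1 * yi psi d i1 i0) + (xr psi c i1 i0 * xr psi d i0 i1 - yi psi c i1 i0 * yi psi d i0 i1) - (xr psi c i1 i1 * xr psi d i0 i0 - yi psi c i1 i1 * yi psi d i0 i0).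
Proof. by rewrite Pmat_E !VBCE !ReIm /xr /yi; ring. Qed.
Lemma PBC_im psi c d : Im (Pmat (VBC psi) c d) = - (xr psi c i0 i0 * yi psi d i1 i1 + yi psi c i0 i0 * xr psi d i1 i1) + (xr psi c i0 i1 * yi psi d i1 i0 + yi psi c i0 i1 * xr psi d i1 i0) + (xr psi c i1 i0 * yi psi d i0 i1 + yi psi c i1 i0 * xr psi d i0 i1) - (xr psi c i1 i1 * yi psi d i0 i0 + yi psi c i1 i1 * xr psi d i0 i0).
Proof. by rewrite Pmat_E !VBCE !ReIm /xr /yi; ring. Qed.

Definition PE := (PAB_re, PAB_im, PAC_re, PAC_im, PBC_re, PBC_im).
Definition rhoE := (rhoAB_re, rhoAB_im, rhoAC_re, rhoAC_im, rhoBC_re, rhoBC_im).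

Lemma F1AB (psi : 'cV[C]_8) : Scorr (rhoAB (proj psi)) =
  Nval psi ^+ 2 + 2 * Tval (Pmat (VAB psi)) - Tval (Pmat (VAC psi)) - Tval (Pmat (VBC psi)).
Proof.
rewrite /Scorr !sum3 !tcE !rhoE /Tval !sum2 /nsq !PE /Nval sum8 /nsq -!/(xr psi _ _ _) -!/(yi psi _ _ _).
move: (xr psi) (yi psi) => x y.
Time ring.
Qed.

Lemma F1AC (psi : 'cV[C]_8) : Scorr (rhoAC (proj psi)) =
  Nval psi ^+ 2 + 2 * Tval (Pmat (VAC psi)) - Tval (Pmat (VAB psi)) - Tval (Pmat (VBC psi)).
Proof.
rewrite /Scorr !sum3 !tcE !rhoE /Tval !sum2 /nsq !PE /Nval sum8 /nsq -!/(xr psi _ _ _) -!/(yi psi _ _ _).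
move: (xr psi) (yi psi) => x y.
ring.
Qed.
Lemma F1BC (psi : 'cV[C]_8) : Scorr (rhoBC (proj psi)) =
  Nval psi ^+ 2 + 2 * Tval (Pmat (VBC psi)) - Tval (Pmat (VAB psi)) - Tval (Pmat (VAC psi)).
Proof.
rewrite /Scorr !sum3 !tcE !rhoE /Tval !sum2 /nsq !PE /Nval sum8 /nsq -!/(xr psi _ _ _) -!/(yi psi _ _ _).
move: (xr psi) (yi psi) => x y.
ring.
Qed.

Definition rhoBm (rho : 'M[C]_8) : 'M[C]_2 :=
  \matrix_(b, b') \sum_(a < 2) \sum_(c < 2) rho (enc3 a b c) (enc3 a b' c).
Definition rhoCm (rho : 'M[C]_8) : 'M[C]_2 :=
  \matrix_(c, c') \sum_(a < 2) \sum_(b < 2) rho (enc3 a b c) (enc3 a b c').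
Definition blochv (M : 'M[C]_2) k : R := Re (\tr (M *m pauli R k)).

Lemma bl0 (M : 'M[C]_2) : Re (\tr (M *m pauli R k0)) = Re (M i0 i1) + Re (M i1 i0).
Proof. by rewrite trmulE !sum2 !ReIm !Re_pauli !Im_pauli /preal /pimag /=; ring. Qed.
Lemma bl1 (M : 'M[C]_2) : Re (\tr (M *m pauli R k1)) = - Im (M i0 i1) + Im (M i1 i0).
Proof. by rewrite trmulE !sum2 !ReIm !Re_pauli !Im_pauli /preal /pimag /=; ring. Qed.
Lemma bl2 (M : 'M[C]_2) : Re (\tr (M *m pauli R k2)) = Re (M i0 i0) - Re (M i1 i1).
Proof. by rewrite trmulE !sum2 !ReIm !Re_pauli !Im_pauli /preal /pimag /=; ring. Qed.
Definition blE := (bl0, bl1, bl2).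

Lemma rhoA_re (psi : 'cV[C]_8) a a' : Re (rhoA (proj psi) a a') =
  \sum_(b < 2) \sum_(c < 2) (xr psi a b c * xr psi a' b c + yi psi a b c * yi psi a' b c).
Proof.
rewrite mxE !sum2 !proj_entry !ReIm /xr /yi; ring.
Qed.
Lemma rhoA_im (psi : 'cV[C]_8) a a' : Im (rhoA (proj psi) a a') =
  \sum_(b < 2) \sum_(c < 2) (yi psi a b c * xr psi a' b c - xr psi a b c * yi psi a' b c).
Proof.
rewrite mxE !sum2 !proj_entry !ReIm /xr /yi; ring.
Qed.
Lemma rhoB_re (psi : 'cV[C]_8) b b' : Re (rhoBm (proj psi) b b') =
  \sum_(a < 2) \sum_(c < 2) (xr psi a b c * xr psi a b' c + yi psi a b c * yi psi a b' c).
Proof.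
rewrite mxE !sum2 !proj_entry !ReIm /xr /yi; ring.
Qed.
Lemma rhoB_im (psi : 'cV[C]_8) b b' : Im (rhoBm (proj psi) b b') =
  \sum_(a < 2) \sum_(c < 2) (yi psi a b c * xr psi a b' c - xr psi a b c * yi psi a b' c).
Proof.
rewrite mxE !sum2 !proj_entry !ReIm /xr /yi; ring.
Qed.
Lemma rhoC_re (psi : 'cV[C]_8) c c' : Re (rhoCm (proj psi) c c') =
  \sum_(a < 2) \sum_(b < 2) (xr psi a b c * xr psi a b c' + yi psi a b c * yi psi a b c').
Proof.
rewrite mxE !sum2 !proj_entry !ReIm /xr /yi; ring.
Qed.
Lemma rhoC_im (psi : 'cV[C]_8) c c' : Im (rhoCm (proj psi) c c') =
  \sum_(a < 2) \sum_(b < 2) (yi psi a b c * xr psi a b c' - xr psi a b c * yi psi a b c').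
Proof.
rewrite mxE !sum2 !proj_entry !ReIm /xr /yi; ring.
Qed.
Definition rho1E := (rhoA_re, rhoA_im, rhoB_re, rhoB_im, rhoC_re, rhoC_im).

Lemma F2a (psi : 'cV[C]_8) : \sum_k bloch (proj psi) k ^+ 2 +
  Tval (Pmat (VAB psi)) + Tval (Pmat (VAC psi)) = Nval psi ^+ 2.
Proof.
rewrite /bloch sum3 !blE !rho1E !sum2 /Tval !sum2 /nsq !PE /Nval sum8 /nsq
  -!/(xr psi _ _ _) -!/(yi psi _ _ _).
move: (xr psi) (yi psi) => x y.
ring.
Qed.
Lemma F2b (psi : 'cV[C]_8) : \sum_k Re (\tr (rhoBm (proj psi) *m pauli R k)) ^+ 2 +
  Tval (Pmat (VAB psi)) + Tval (Pmat (VBC psi)) = Nval psi ^+ 2.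
Proof.
rewrite sum3 !blE !rho1E !sum2 /Tval !sum2 /nsq !PE /Nval sum8 /nsq
  -!/(xr psi _ _ _) -!/(yi psi _ _ _).
move: (xr psi) (yi psi) => x y.
ring.
Qed.
Lemma F2c (psi : 'cV[C]_8) : \sum_k Re (\tr (rhoCm (proj psi) *m pauli R k)) ^+ 2 +
  Tval (Pmat (VAC psi)) + Tval (Pmat (VBC psi)) = Nval psi ^+ 2.
Proof.
rewrite sum3 !blE !rho1E !sum2 /Tval !sum2 /nsq !PE /Nval sum8 /nsq
  -!/(xr psi _ _ _) -!/(yi psi _ _ _).
move: (xr psi) (yi psi) => x y.
ring.
Qed.

Lemma det2 (T : comPzRingType) (M : 'M[T]_2) : \det M = M i0 i0 * M i1 i1 - M i0 i1 * M i1 i0.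
Proof.
rewrite (expand_det_row _ i0) sum2 /cofactor !det_mx11 !mxE /=.
rewrite !expr0 !expr1 !mul1r !mulN1r.
have -> : lift i0 ord0 = i1 :> 'I_2 by apply: val_inj.
have -> : lift i1 ord0 = i0 :> 'I_2 by apply: val_inj.
by rewrite mulrN.
Qed.

Lemma F3a (psi : 'cV[C]_8) : Re (\det (Pmat (VAB psi))) = Re (\det (Pmat (VAC psi))) /\
                             Im (\det (Pmat (VAB psi))) = Im (\det (Pmat (VAC psi))).
Proof.
rewrite !det2 !ReIm !PE; move: (xr psi) (yi psi) => x y; split; ring.
Qed.
Lemma F3b (psi : 'cV[C]_8) : Re (\det (Pmat (VAB psi))) = Re (\det (Pmat (VBC psi))) /\
                             Im (\det (Pmat (VAB psi))) = Im (\det (Pmat (VBC psi))).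
Proof.
rewrite !det2 !ReIm !PE; move: (xr psi) (yi psi) => x y; split; ring.
Qed.

Lemma Pmat_sym (V : 'M[C]_(4,2)) c d : Pmat V c d = Pmat V d c.
Proof. by rewrite !Pmat_E; ring. Qed.
End Pure2.

Lemma det2g (T : comPzRingType) (M : 'M[T]_2) : \det M = M i0 i0 * M i1 i1 - M i0 i1 * M i1 i0.
Proof.
rewrite (expand_det_row _ i0) sum2 /cofactor !det_mx11 !mxE /=.
rewrite !expr0 !expr1 !mul1r !mulN1r.
have -> : lift i0 ord0 = i1 :> 'I_2 by apply: val_inj.
have -> : lift i1 ord0 = i0 :> 'I_2 by apply: val_inj.
by rewrite mulrN.
Qed.

Section Sylv.
Variable F : fieldType.

Lemma sylvester m n (A : 'M[F]_(m,n)) (B : 'M[F]_(n,m)) :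
  'X^n * char_poly (A *m B) = 'X^m * char_poly (B *m A).
Proof.
pose Ap := map_mx polyC A; pose Bp := map_mx polyC B.
have eAB : char_poly (A *m B) = \det ('X%:M - Ap *m Bp) by rewrite /char_poly /char_poly_mx map_mxM.
have eBA : char_poly (B *m A) = \det ('X%:M - Bp *m Ap) by rewrite /char_poly /char_poly_mx map_mxM.
pose M := block_mx ('X%:M : 'M_m) Ap Bp (1%:M : 'M_n).
have dM : \det M = char_poly (A *m B).
  have -> : M = block_mx 1%:M Ap 0 1%:M *m block_mx ('X%:M - Ap *m Bp) 0 Bp 1%:M.
    rewrite mulmx_block ?mul1mx ?mul0mx ?mulmx1 ?mulmx0 ?add0r ?addr0.
    by rewrite subrK.
  by rewrite det_mulmx det_ublock det_lblock !det1 eAB !mul1r mulr1.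
pose N := block_mx ('X%:M : 'M_m) Ap ('X *: Bp) ('X%:M : 'M_n).
have dN1 : \det N = 'X^n * \det M.
  have -> : N = block_mx 1%:M 0 0 ('X%:M) *m M.
    rewrite mulmx_block ?mul1mx ?mul0mx ?add0r ?addr0 mul_scalar_mx ?mulmx1.
    by [].
  by rewrite det_mulmx det_ublock det1 det_scalar mul1r.
have dN2 : \det N = 'X^m * char_poly (B *m A).
  have -> : N = block_mx 1%:M 0 Bp 1%:M *m block_mx ('X%:M) Ap 0 ('X%:M - Bp *m Ap).
    rewrite mulmx_block ?mul1mx ?mul0mx ?mulmx0 ?add0r ?addr0 mul_mx_scalar.
    by rewrite addrC subrK.
  by rewrite det_mulmx det_lblock det_ublock !det1 det_scalar !mul1r ?mulr1 eBA.
by rewrite -dM -dN1 dN2.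
Qed.

Lemma sylvester42 (A : 'M[F]_(4,2)) (B : 'M[F]_(2,4)) :
  char_poly (A *m B) = 'X^2 * char_poly (B *m A).
Proof.
have := @sylvester 4 2 A B.
have -> : ('X^4 : {poly F}) = 'X^2 * 'X^2 by rewrite -exprD.
have nz : ('X^2 : {poly F}) != 0 by rewrite expf_neq0 // polyX_eq0.
move=> H; apply: (mulfI nz); rewrite mulrA; exact: H.
Qed.

Lemma charpoly2 (N : 'M[F]_2) :
  char_poly N = 'X^2 - (\tr N)%:P * 'X + (\det N)%:P.
Proof.
rewrite /char_poly /char_poly_mx det2g !mxE /= det2g /mxtrace sum2.
rewrite !mulr1n !mulr0n !sub0r.
rewrite ?rmorphD ?rmorphB ?rmorphN ?rmorphM /=.
ring.
Qed.

Lemma quartic (u1 u2 u3 u4 v1 v2 v3 v4 : F) :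
  ('X - u1%:P) * ('X - u2%:P) * ('X - u3%:P) * ('X - u4%:P) =
  ('X - v1%:P) * ('X - v2%:P) * ('X - v3%:P) * ('X - v4%:P) ->
  [/\ u1 + u2 + u3 + u4 = v1 + v2 + v3 + v4,
      u1*u2 + u1*u3 + u1*u4 + u2*u3 + u2*u4 + u3*u4 =
      v1*v2 + v1*v3 + v1*v4 + v2*v3 + v2*v4 + v3*v4,
      u1*u2*u3 + u1*u2*u4 + u1*u3*u4 + u2*u3*u4 =
      v1*v2*v3 + v1*v2*v4 + v1*v3*v4 + v2*v3*v4 &
      u1*u2*u3*u4 = v1*v2*v3*v4].
Proof.
have nf : forall w1 w2 w3 w4 : F,
  ('X - w1%:P) * ('X - w2%:P) * ('X - w3%:P) * ('X - w4%:P) =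
  'X^4 + (- (w1 + w2 + w3 + w4))%:P * 'X^3
  + (w1*w2 + w1*w3 + w1*w4 + w2*w3 + w2*w4 + w3*w4)%:P * 'X^2
  + (- (w1*w2*w3 + w1*w2*w4 + w1*w3*w4 + w2*w3*w4))%:P * 'X
  + (w1*w2*w3*w4)%:P.
  move=> w1 w2 w3 w4; rewrite !rmorphN !rmorphD !rmorphM /=; ring.
rewrite !nf => E.
have c3 := congr1 (fun p : {poly F} => p`_3) E.
have c2 := congr1 (fun p : {poly F} => p`_2) E.
have c1 := congr1 (fun p : {poly F} => p`_1) E.
have c0 := congr1 (fun p : {poly F} => p`_0) E.
move: c3 c2 c1 c0; rewrite /= !coefD !coefCM !coefXn !coefX !coefC /=.
rewrite !mulr0 !mulr1 !add0r !addr0.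
by move=> /oppr_inj -> -> /oppr_inj -> ->.
Qed.
End Sylv.

Set Implicit Arguments. Unset Strict Implicit.

Section Conc.
Variable R : realType.
Local Notation C := R[i].

Lemma nsq_ge0 (z : C) : 0 <= nsq z.
Proof. by rewrite /nsq addr_ge0 ?sqr_ge0. Qed.

Lemma mulJ (z : C) : z * Num.conj z = (nsq z)%:C%C.
Proof.
apply/eqP; rewrite eq_complex; apply/andP; split; apply/eqP;
by rewrite /nsq !ReIm /=; ring.
Qed.

Lemma enc2_hilo (i : 'I_4) : enc2 (hi2 i) (lo2 i) = i.
Proof. by apply: val_inj; case: i => [[|[|[|[|//]]]] ?]; rewrite /enc2 /hi2 /lo2 /= !inordK. Qed.

Lemma conj_ky a a' : Num.conj (@ky R a a') = @ky R a a'.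
Proof. by rewrite /ky; case: ifP => _; rewrite ?rmorph0 //; case: ifP => _; rewrite ?rmorphN ?rmorph1. Qed.

Lemma conj_negmul (x y : C) : Num.conj (- (x * y)) = - (Num.conj x * Num.conj y).
Proof. by rewrite rmorphN rmorphM. Qed.

Lemma conjmx_Kmat : Defs.conjmx ((@Kmat R)) = (@Kmat R).
Proof.
apply/matrixP => i j; rewrite mxE -(enc2_hilo i) -(enc2_hilo j) KmatE.
by rewrite conj_negmul !conj_ky.
Qed.

Lemma conjmxK m n (M : 'M[C]_(m,n)) : Defs.conjmx (Defs.conjmx M) = M.
Proof. by apply/matrixP => i j; rewrite !mxE Num.Theory.conjCK. Qed.
Lemma conjmxM m n p (M : 'M[C]_(m,n)) (N : 'M[C]_(n,p)) : Defs.conjmx (M *m N) = Defs.conjmx M *m Defs.conjmx N.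
Proof. exact: map_mxM. Qed.
Lemma conjmx_tr m n (M : 'M[C]_(m,n)) : Defs.conjmx M^T = (Defs.conjmx M)^T.
Proof. by apply/matrixP => i j; rewrite !mxE. Qed.
Lemma adjmxE m n (M : 'M[C]_(m,n)) : adjmx M = (Defs.conjmx M)^T.
Proof. by apply/matrixP => i j; rewrite !mxE. Qed.

Lemma wootters_V (V : 'M[C]_(4,2)) :
  wootters_mx (V *m adjmx V) = (V *m Defs.conjmx (Pmat V)) *m (V^T *m (@Kmat R)).
Proof.
rewrite /wootters_mx -/((@Kmat R)) /Pmat adjmxE.
have e1 : Defs.conjmx (V *m (Defs.conjmx V)^T) = Defs.conjmx V *m V^T.
  by rewrite conjmxM conjmx_tr conjmxK.
have e2 : Defs.conjmx (V^T *m (@Kmat R) *m V) = (Defs.conjmx V)^T *m (@Kmat R) *m Defs.conjmx V.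
  by rewrite !conjmxM conjmx_Kmat conjmx_tr.
by rewrite e1 e2 !mulmxA.
Qed.

Lemma trPP (V : 'M[C]_(4,2)) :
  \tr (Pmat V *m Defs.conjmx (Pmat V)) = (Tval (Pmat V))%:C%C.
Proof.
rewrite /mxtrace /Tval; have sym := Pmat_sym V i1 i0; move: (Pmat V) sym => P sym.
rewrite !sum2 !mxE !sum2 !mxE sym !mulJ.
by rewrite -!rmorphD.
Qed.

Lemma detPP (V : 'M[C]_(4,2)) :
  \det (Pmat V *m Defs.conjmx (Pmat V)) = (nsq (\det (Pmat V)))%:C%C.
Proof. by rewrite det_mulmx det_map_mx mulJ. Qed.

Lemma charW (V : 'M[C]_(4,2)) :
  char_poly (wootters_mx (V *m adjmx V)) =
  'X^2 * ('X^2 - ((Tval (Pmat V))%:C%C)%:P * 'X + ((nsq (\det (Pmat V)))%:C%C)%:P).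
Proof.
rewrite wootters_V sylvester42.
have -> : (V^T *m (@Kmat R)) *m (V *m Defs.conjmx (Pmat V)) = Pmat V *m Defs.conjmx (Pmat V)
  by rewrite /Pmat !mulmxA.
by rewrite charpoly2 trPP detPP.
Qed.

Lemma nsqM (x y : C) : nsq (x * y) = nsq x * nsq y.
Proof. by rewrite /nsq !ReIm; ring. Qed.
Lemma nsqB (x y : C) : nsq (x - y) = nsq x + nsq y - 2 * (Re x * Re y + Im x * Im y).
Proof. by rewrite /nsq !ReIm; ring. Qed.

Lemma sqrt_nsqB (x y : C) : Num.sqrt (nsq (x - y)) <= Num.sqrt (nsq x) + Num.sqrt (nsq y).
Proof.
have hx := nsq_ge0 x; have hy := nsq_ge0 y.
have ha : 0 <= Num.sqrt (nsq x) := sqrtr_ge0 _.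
have hb : 0 <= Num.sqrt (nsq y) := sqrtr_ge0 _.
have ea : Num.sqrt (nsq x) ^+ 2 = nsq x by rewrite sqr_sqrtr.
have eb : Num.sqrt (nsq y) ^+ 2 = nsq y by rewrite sqr_sqrtr.
set a := Num.sqrt (nsq x) in ha ea *; set b := Num.sqrt (nsq y) in hb eb *.
have key : nsq (x - y) <= (a + b) ^+ 2.
  rewrite nsqB.
  set t := Re x * Re y + Im x * Im y.
  have cs : t ^+ 2 <= nsq x * nsq y.
    rewrite /t /nsq -subr_ge0.
    have -> : (Re x ^+ 2 + Im x ^+ 2) * (Re y ^+ 2 + Im y ^+ 2) - (Re x * Re y + Im x * Im y) ^+ 2
       = (Re x * Im y - Im x * Re y) ^+ 2 by ring.
    exact: sqr_ge0.
  have h1 : - t <= a * b.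
    rewrite /a /b -sqrtrM //.
    apply: (le_trans (ler_norm (- t))); rewrite normrN -sqrtr_sqr.
    exact: ler_wsqrtr.
  have -> : (a + b) ^+ 2 = a ^+ 2 + b ^+ 2 + 2 * (a * b) by ring.
  rewrite ea eb; lra.
have := ler_wsqrtr key; rewrite sqrtr_sqr ger0_norm //; exact: addr_ge0.
Qed.

Lemma TgeD (V : 'M[C]_(4,2)) : 2 * Num.sqrt (nsq (\det (Pmat V))) <= Tval (Pmat V).
Proof.
rewrite det2 (Pmat_sym V i1 i0) /Tval !sum2 (Pmat_sym V i1 i0).
move: (Pmat V i0 i0) (Pmat V i0 i1) (Pmat V i1 i1) => u v w.
have h := sqrt_nsqB (u * w) (v * v).
rewrite !nsqM !sqrtrM ?nsq_ge0 // in h.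
have e1 : Num.sqrt (nsq v) * Num.sqrt (nsq v) = nsq v by rewrite -expr2 sqr_sqrtr ?nsq_ge0.
rewrite e1 in h.
have hu := sqr_sqrtr (nsq_ge0 u); have hw := sqr_sqrtr (nsq_ge0 w).
have amgm : 2 * (Num.sqrt (nsq u) * Num.sqrt (nsq w)) <= nsq u + nsq w.
  have h0 := sqr_ge0 (Num.sqrt (nsq u) - Num.sqrt (nsq w)).
  have e : (Num.sqrt (nsq u) - Num.sqrt (nsq w)) ^+ 2 = Num.sqrt (nsq u) ^+ 2 + Num.sqrt (nsq w) ^+ 2
     - 2 * (Num.sqrt (nsq u) * Num.sqrt (nsq w)) by ring.
  rewrite e hu hw in h0; lra.
lra.
Qed.

Lemma conc_char (rho : 'M[C]_4) (T d : R) :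
  char_poly (wootters_mx rho) = 'X^2 * ('X^2 - ((T%:C)%C)%:P * 'X + (((d ^+ 2)%:C)%C)%:P) ->
  0 <= d -> 2 * d <= T -> concurrence rho ^+ 2 = T - 2 * d.
Proof.
move=> hc hd hT.
pose p := Num.sqrt (T + 2 * d); pose q := Num.sqrt (T - 2 * d).
have hp2 : p ^+ 2 = T + 2 * d by rewrite sqr_sqrtr //; lra.
have hq2 : q ^+ 2 = T - 2 * d by rewrite sqr_sqrtr //; lra.
have hp : 0 <= p := sqrtr_ge0 _.
have hq : 0 <= q := sqrtr_ge0 _.
have hqp : q <= p by apply: ler_wsqrtr; lra.
pose s1 := (p + q) / 2; pose s2 := (p - q) / 2.
have es1 : s1 ^+ 2 + s2 ^+ 2 = T.
  have -> : s1 ^+ 2 + s2 ^+ 2 = (p ^+ 2 + q ^+ 2) / 2 by rewrite /s1 /s2; field.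
  by rewrite hp2 hq2; field.
have es2 : s1 * s2 = d.
  have -> : s1 * s2 = (p ^+ 2 - q ^+ 2) / 4 by rewrite /s1 /s2; field.
  by rewrite hp2 hq2; field.
have hs2 : 0 <= s2 by rewrite /s2; lra.
have hs12 : s2 <= s1 by rewrite /s1 /s2; lra.
have spec1 : wootters_lambdas_spec (wootters_mx rho) [:: s1; s2; 0; 0].
  split => //.
  - by rewrite /= lexx hs2 andbT /=; apply/andP; split => //; lra.
  - by rewrite /= lexx hs12 hs2.
  rewrite hc !big_cons big_nil mulr1 expr0n /= rmorph0 subr0.
  have -> : T = s1 ^+ 2 + s2 ^+ 2 by rewrite es1.
  have -> : d ^+ 2 = s1 ^+ 2 * s2 ^+ 2 by rewrite -es2 exprMn.
  rewrite ?rmorphD ?rmorphM /= ?rmorphD ?rmorphM /=.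
  ring.
have cp1 : char_poly (wootters_mx rho) =
    \prod_(x <- [:: s1; s2; 0; 0]) ('X - ((x ^+ 2)%:C)%C%:P) by case: spec1.
rewrite /concurrence /wootters_lambdas.
case: xgetP => [s _ [Hsz Hall Hsort Hcp] | H]; last by case: (H _ spec1).
move: Hsz Hall Hsort Hcp; case: s => [|a [|b [|c [|e [|]]]]] //= _.
move=> /and5P [ha hb hc' he _] /and4P [hab hbc hce _] Hcp.
have E : \prod_(x <- [:: a; b; c; e]) ('X - ((x ^+ 2)%:C)%C%:P) =
         \prod_(x <- [:: s1; s2; 0; 0]) ('X - ((x ^+ 2)%:C)%C%:P) by rewrite -Hcp cp1.
move: E; rewrite !big_cons !big_nil !mulr1 !mulrA => /quartic [E1 E2 E3 E4].
move: E1; rewrite -!rmorphD => /complexI E1.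
move: E2; rewrite -!rmorphM -!rmorphD => /complexI E2.
move: E3; rewrite -!rmorphM -!rmorphD => /complexI E3.
move: E4; rewrite -!rmorphM => /complexI E4.
have R4 : (a * b * c * e) ^+ 2 = 0 by move: E4 => h; nra.
have e0 : e = 0.
  move/eqP: R4; rewrite expf_eq0 /= !mulf_eq0 => /orP[/orP[/orP[]|]|] /eqP h; lra.
have R3 : (a * b * c) ^+ 2 = 0.
  by move: E3; rewrite e0 => h; nra.
have c0 : c = 0.
  move/eqP: R3; rewrite expf_eq0 /= !mulf_eq0 => /orP[/orP[]|] /eqP h; lra.
rewrite c0 e0 in E1 E2.
have Eab : (a * b) ^+ 2 = d ^+ 2.
  by move: E2 => h; rewrite -es2; nra.
have ab : a * b = d.
  have := congr1 Num.sqrt Eab; rewrite !sqrtr_sqr !ger0_norm //; exact: mulr_ge0.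
have Eab2 : a ^+ 2 + b ^+ 2 = T.
  by move: E1 => h; rewrite -es1; nra.
rewrite c0 e0 !subr0.
have -> : Num.max 0 (a - b) = a - b by apply/max_idPr; lra.
have -> : (a - b) ^+ 2 = (a ^+ 2 + b ^+ 2) - 2 * (a * b) by ring.
by rewrite Eab2 ab.
Qed.
End Conc.

Set Implicit Arguments. Unset Strict Implicit.

Section PureFinal.
Variable R : realType.
Local Notation C := R[i].

Lemma rhoAB_V (psi : 'cV[C]_8) : rhoAB (proj psi) = VAB psi *m adjmx (VAB psi).
Proof. by apply/matrixP => i j; rewrite !mxE; apply: eq_bigr => c _; rewrite proj_entry !mxE. Qed.
Lemma rhoAC_V (psi : 'cV[C]_8) : rhoAC (proj psi) = VAC psi *m adjmx (VAC psi).
Proof. by apply/matrixP => i j; rewrite !mxE; apply: eq_bigr => c _; rewrite proj_entry !mxE. Qed.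
Lemma rhoBC_V (psi : 'cV[C]_8) : rhoBC (proj psi) = VBC psi *m adjmx (VBC psi).
Proof. by apply/matrixP => i j; rewrite !mxE; apply: eq_bigr => c _; rewrite proj_entry !mxE. Qed.

Lemma concV (V : 'M[C]_(4,2)) :
  concurrence (V *m adjmx V) ^+ 2 = Tval (Pmat V) - 2 * Num.sqrt (nsq (\det (Pmat V))).
Proof.
apply: conc_char; last exact: TgeD; last exact: sqrtr_ge0.
by rewrite charW sqr_sqrtr ?nsq_ge0.
Qed.

Lemma Re_sum n (F : 'I_n -> C) : Re (\sum_i F i) = \sum_i Re (F i).
Proof. exact: (big_morph (@complex.Re R) (@cReD R) (@cRe0 R)). Qed.

Lemma Nval_unit (psi : 'cV[C]_8) : unit_vec psi -> Nval psi = 1.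
Proof.
rewrite /unit_vec mxE => /(congr1 (@complex.Re R)); rewrite Re_sum cRe1 => <-.
by apply: eq_bigr => i _; rewrite !mxE mulrC mulJ cReR.
Qed.

Definition Dv (V : 'M[C]_(4,2)) : R := Num.sqrt (nsq (\det (Pmat V))).

Lemma lin1 (S c1 c2 T1 T2 D1 D2 N : R) : c1 = T1 - 2 * D1 -> c2 = T2 - 2 * D2 ->
  S + T1 + T2 = N ^+ 2 -> N = 1 -> 1 - S - c1 - c2 = 2 * D1 + 2 * D2.
Proof. move=> h1 h2 h3 h4; rewrite h4 expr1n in h3; lra. Qed.

Lemma tau_pureE (psi : 'cV[C]_8) : unit_vec psi ->
  tau_pure psi = 2 * Dv (VAB psi) + 2 * Dv (VAC psi).
Proof.
move=> u; rewrite /tau_pure.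
have h1 : concurrence (rhoAB (proj psi)) ^+ 2 = Tval (Pmat (VAB psi)) - 2 * Dv (VAB psi)
  by rewrite rhoAB_V concV.
have h2 : concurrence (rhoAC (proj psi)) ^+ 2 = Tval (Pmat (VAC psi)) - 2 * Dv (VAC psi)
  by rewrite rhoAC_V concV.
exact: (lin1 h1 h2 (F2a psi) (Nval_unit u)).
Qed.

Lemma Dv_eq (psi : 'cV[C]_8) : Dv (VAC psi) = Dv (VAB psi) /\ Dv (VBC psi) = Dv (VAB psi).
Proof.
rewrite /Dv; move: (F3a psi) (F3b psi).
move: (\det (Pmat (VAB psi))) (\det (Pmat (VAC psi))) (\det (Pmat (VBC psi))) => x y z [h1 h2] [h3 h4].
by rewrite /nsq -h1 -h2 -h3 -h4.
Qed.

Lemma lin2 (t SAB SAC SBC TAB TAC TBC D D2 D3 b c N : R) :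
   SAB = N ^+ 2 + 2 * TAB - TAC - TBC -> SAC = N ^+ 2 + 2 * TAC - TAB - TBC ->
   SBC = N ^+ 2 + 2 * TBC - TAB - TAC ->
   b + TAB + TBC = N ^+ 2 -> c + TAC + TBC = N ^+ 2 -> N = 1 -> 0 <= b -> 0 <= c ->
   2 * D <= TAB -> 2 * D2 <= TAC -> 2 * D3 <= TBC -> 0 <= D -> D2 = D -> D3 = D ->
   t = 2 * D + 2 * D2 ->
   [/\ 0 <= t, SAB + 2 * t <= 3, SAC + 2 * t <= 3 & SBC + 2 * t <= 3].
Proof.
move=> h1 h2 h3 h4 h5 h6 *; rewrite h6 expr1n in h1 h2 h3 h4 h5; split; lra.
Qed.

Lemma pure_ineq (psi : 'cV[C]_8) : unit_vec psi ->
  [/\ 0 <= tau_pure psi,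
      Scorr (rhoAB (proj psi)) + 2 * tau_pure psi <= 3,
      Scorr (rhoAC (proj psi)) + 2 * tau_pure psi <= 3 &
      Scorr (rhoBC (proj psi)) + 2 * tau_pure psi <= 3].
Proof.
move=> u.
have [eAC eBC] := Dv_eq psi.
have b0 : 0 <= \sum_k Re (\tr (rhoBm (proj psi) *m pauli R k)) ^+ 2
  by apply: sumr_ge0 => k _; exact: sqr_ge0.
have c0 : 0 <= \sum_k Re (\tr (rhoCm (proj psi) *m pauli R k)) ^+ 2
  by apply: sumr_ge0 => k _; exact: sqr_ge0.
have d0 : 0 <= Dv (VAB psi) by exact: sqrtr_ge0.
exact: (lin2 (F1AB psi) (F1AC psi) (F1BC psi) (F2b psi) (F2c psi) (Nval_unit u) b0 c0
   (TgeD (VAB psi)) (TgeD (VAC psi)) (TgeD (VBC psi)) d0 eAC eBC (tau_pureE u)).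
Qed.
End PureFinal.

From mathcomp Require Import spectral.
Set Implicit Arguments. Unset Strict Implicit.

Section Spec.
Variable R : realType.
Local Notation C := R[i].

Lemma ge0_C (z : C) : 0 <= z -> Im z = 0 /\ 0 <= Re z.
Proof. by case: z => a b; rewrite lecE /= => /andP [/eqP <- ->]. Qed.

Lemma sumdelta n (F : 'I_n -> C) j : \sum_x ((x == j)%:R * F x) = F j.
Proof.
rewrite (bigD1 j) //= eqxx mul1r big1 ?addr0 // => x /negbTE ->.
by rewrite mul0r.
Qed.

Definition qf n (rho : 'M[C]_n) (v : 'cV[C]_n) : C := (adjmx v *m rho *m v) 0 0.

Lemma qfE n (rho : 'M[C]_n) v :
  qf rho v = \sum_x \sum_y Num.conj (v x 0) * rho x y * v y 0.
Proof.
rewrite /qf mxE exchange_big; apply: eq_bigr => y _.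
rewrite mxE mulr_suml; apply: eq_bigr => x _.
by rewrite !mxE.
Qed.

Definition vec n (j k : 'I_n) (a : C) : 'cV[C]_n := \col_x ((x == j)%:R + a * (x == k)%:R).

Lemma qf_vec n (rho : 'M[C]_n) j k a :
  qf rho (vec j k a) = rho j j + a * rho j k + Num.conj a * rho k j + Num.conj a * a * rho k k.
Proof.
rewrite qfE.
have inner : forall x, \sum_y Num.conj (vec j k a x 0) * rho x y * vec j k a y 0 =
    Num.conj (vec j k a x 0) * (rho x j + a * rho x k).
  move=> x; rewrite -[rho x j](sumdelta (fun y => rho x y)) -[rho x k](sumdelta (fun y => rho x y)).
  rewrite mulr_sumr -big_split /= mulr_sumr.
  by apply: eq_bigr => y _; rewrite [vec _ _ _ y 0]mxE; ring.
rewrite (eq_bigr _ (fun x _ => inner x)).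
have -> : rho j j + a * rho j k + Num.conj a * rho k j + Num.conj a * a * rho k k =
   \sum_x ((x == j)%:R * (rho x j + a * rho x k)) + Num.conj a * \sum_x ((x == k)%:R * (rho x j + a * rho x k)).
  by rewrite !sumdelta; ring.
rewrite mulr_sumr -big_split /=; apply: eq_bigr => x _.
by rewrite mxE rmorphD rmorphM /= rmorph_nat; ring.
Qed.

Lemma conj_i : Num.conj ('i%C : C) = - 'i%C.
Proof. by apply/eqP; rewrite eq_complex /= oppr0 !eqxx. Qed.

Lemma psd_herm n (rho : 'M[C]_n) : psd rho -> forall j k, rho k j = Num.conj (rho j k).
Proof.
move=> H j k.
have h0 : forall x, Im (rho x x) = 0.
  move=> x; have := H (vec x x 0); rewrite -/(qf _ _) qf_vec rmorph0 !mul0r !addr0.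
  by case/ge0_C.
have h1 := H (vec j k 1); rewrite -/(qf _ _) qf_vec rmorph1 !mul1r in h1.
have h2 := H (vec j k 'i%C); rewrite -/(qf _ _) qf_vec conj_i in h2.
case: (ge0_C h1) => i1 _; case: (ge0_C h2) => i2 _.
move: i1 i2; rewrite !ReIm h0 h0 /= => i1 i2.
apply/eqP; rewrite eq_complex; apply/andP; split; apply/eqP; rewrite ?ReIm; lra.
Qed.

Lemma mulmx3E m n p q (A : 'M[C]_(m,n)) (B : 'M[C]_(n,p)) (D : 'M[C]_(p,q)) i j :
  (A *m B *m D) i j = \sum_y (\sum_x A i x * B x y) * D y j.
Proof. by rewrite mxE; apply: eq_bigr => y _; rewrite mxE. Qed.

Lemma exists_decomp (rho : 'M[C]_8) : is_state rho ->
  exists n (p : 'I_n -> R) (psi : 'I_n -> 'cV[C]_8), decomposition rho p psi.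
Proof.
move=> [Hpsd Htr].
have herm := psd_herm Hpsd.
have adjrho : adjmx rho = rho.
  by apply/matrixP => i j; rewrite !mxE -herm.
have normal : rho \is normalmx.
  apply/normalmxP; change (rho *m adjmx rho = adjmx rho *m rho); by rewrite adjrho.
move/orthomx_spectralP: normal.
set P := spectralmx rho; set sp := spectral_diag rho => eq.
have uP : P \is unitarymx := spectral_unitarymx rho.
have PP : P *m adjmx P = 1%:M by apply/unitarymxP.
have eq' : rho = adjmx P *m diag_mx sp *m P by rewrite {1}eq invmx_unitary.
pose u i : 'cV[C]_8 := \col_x Num.conj (P i x).
pose p i := Re (sp 0 i).
have Hd : P *m rho *m adjmx P = diag_mx sp.
  by rewrite eq' !mulmxA PP mul1mx -mulmxA PP mulmx1.
have spE : forall i, sp 0 i = qf rho (u i).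
  move=> i; have := congr1 (fun M : 'M[C]_8 => M i i) Hd.
  rewrite /= [diag_mx sp i i]mxE eqxx mulr1n => <-.
  rewrite mulmx3E qfE exchange_big; apply: eq_bigr => y _.
  rewrite mulr_suml; apply: eq_bigr => x _.
  by rewrite !mxE Num.Theory.conjCK.
have sp0 : forall i, 0 <= sp 0 i by move=> i; rewrite spE; exact: Hpsd.
have spR : forall i, sp 0 i = (p i)%:C%C.
  move=> i; case: (ge0_C (sp0 i)) => hi _.
  by apply/eqP; rewrite eq_complex /p /= hi !eqxx.
exists 8, p, u; split.
- by move=> i; case: (ge0_C (sp0 i)).
- have : \tr rho = \sum_j sp 0 j.
    rewrite eq' mxtrace_mulC mulmxA PP mul1mx.
    by rewrite /mxtrace; apply: eq_bigr => j _; rewrite mxE eqxx mulr1n.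
  rewrite Htr => /(congr1 (@complex.Re R)) /=.
  rewrite (big_morph (@complex.Re R) (@cReD R) (@cRe0 R)) => ->.
  by [].
- move=> i; rewrite /unit_vec.
  have := congr1 (fun M : 'M[C]_8 => M i i) PP; rewrite /= [1%:M i i]mxE eqxx mulr1n => <-.
  rewrite !mxE; apply: eq_bigr => x _; rewrite !mxE Num.Theory.conjCK mulrC.
  by [].
- apply/matrixP => x y; rewrite {1}eq' mulmx3E summxE; apply: eq_bigr => k _.
  rewrite mxE -spR !mxE big_ord1 !mxE Num.Theory.conjCK.
  rewrite (bigD1 k) //= big1 ?addr0.
    by rewrite !mxE eqxx mulr1n; ring.
  by move=> j /negbTE njk; rewrite !mxE njk mulr0n mulr0.
Qed.
End Spec.

Set Implicit Arguments. Unset Strict Implicit.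

Section Mixed.
Variable R : realType.
Local Notation C := R[i].

Lemma rhoAB_lin n (c : 'I_n -> C) (M : 'I_n -> 'M[C]_8) :
  rhoAB (\sum_i c i *: M i) = \sum_i c i *: rhoAB (M i).
Proof.
apply/matrixP => x y; rewrite !mxE summxE.
under eq_bigr do rewrite summxE.
rewrite exchange_big; apply: eq_bigr => i _; rewrite !mxE mulr_sumr.
by apply: eq_bigr => cc _; rewrite mxE.
Qed.
Lemma rhoAC_lin n (c : 'I_n -> C) (M : 'I_n -> 'M[C]_8) :
  rhoAC (\sum_i c i *: M i) = \sum_i c i *: rhoAC (M i).
Proof.
apply/matrixP => x y; rewrite !mxE summxE.
under eq_bigr do rewrite summxE.
rewrite exchange_big; apply: eq_bigr => i _; rewrite !mxE mulr_sumr.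
by apply: eq_bigr => cc _; rewrite mxE.
Qed.
Lemma rhoBC_lin n (c : 'I_n -> C) (M : 'I_n -> 'M[C]_8) :
  rhoBC (\sum_i c i *: M i) = \sum_i c i *: rhoBC (M i).
Proof.
apply/matrixP => x y; rewrite !mxE summxE.
under eq_bigr do rewrite summxE.
rewrite exchange_big; apply: eq_bigr => i _; rewrite !mxE mulr_sumr.
by apply: eq_bigr => cc _; rewrite mxE.
Qed.

Lemma tcorr_lin n (p : 'I_n -> R) (N : 'I_n -> 'M[C]_4) k l :
  tcorr (\sum_i (p i)%:C%C *: N i) k l = \sum_i p i * tcorr (N i) k l.
Proof.
rewrite /tcorr mulmx_suml /mxtrace.
under eq_bigr do rewrite summxE.
rewrite exchange_big Re_sum; apply: eq_bigr => i _.
rewrite -scalemxAl.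
under eq_bigr do rewrite mxE.
by rewrite -mulr_sumr cReM cReR cImR mul0r subr0.
Qed.

Lemma jensen n (p t : 'I_n -> R) : (forall i, 0 <= p i) -> \sum_i p i = 1 ->
  (\sum_i p i * t i) ^+ 2 <= \sum_i p i * t i ^+ 2.
Proof.
move=> hp hs; set m := \sum_i p i * t i.
have h0 : 0 <= \sum_i p i * (t i - m) ^+ 2.
  by apply: sumr_ge0 => i _; apply: mulr_ge0 => //; exact: sqr_ge0.
have e : \sum_i p i * (t i - m) ^+ 2 =
    \sum_i p i * t i ^+ 2 + (- (2 * m)) * m + m ^+ 2 * \sum_i p i.
  rewrite (eq_bigr (fun i => p i * t i ^+ 2 + ((- (2 * m)) * (p i * t i) + m ^+ 2 * p i))); last first.
    by move=> i _; ring.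
  by rewrite !big_split /= -!mulr_sumr addrA.
rewrite e hs in h0; nra.
Qed.

Lemma Scorr_convex n (p : 'I_n -> R) (N : 'I_n -> 'M[C]_4) :
  (forall i, 0 <= p i) -> \sum_i p i = 1 ->
  Scorr (\sum_i (p i)%:C%C *: N i) <= \sum_i p i * Scorr (N i).
Proof.
move=> hp hs; rewrite /Scorr.
under eq_bigr do under eq_bigr do rewrite tcorr_lin.
have -> : \sum_i p i * (\sum_k \sum_l tcorr (N i) k l ^+ 2) =
          \sum_k \sum_l \sum_i p i * tcorr (N i) k l ^+ 2.
  under eq_bigr do rewrite mulr_sumr.
  rewrite exchange_big; apply: eq_bigr => k _.
  under eq_bigr do rewrite mulr_sumr.
  by rewrite exchange_big.
apply: ler_sum => k _; apply: ler_sum => l _.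
exact: jensen.
Qed.

Lemma lin3 (S x y : R) : S <= y -> y <= 3 - 2 * x -> S + 2 * x <= 3.
Proof. lra. Qed.

Lemma mixed_bound (rho : 'M[C]_8) n (p : 'I_n -> R) (psi : 'I_n -> 'cV[C]_8) :
  decomposition rho p psi ->
  Smax rho + 2 * (\sum_i p i * tau_pure (psi i)) <= 3 /\
  0 <= \sum_i p i * tau_pure (psi i).
Proof.
case=> hp hs hu ->.
have key : forall f : 'I_n -> R, (forall i, f i + 2 * tau_pure (psi i) <= 3) ->
    \sum_i p i * f i <= 3 - 2 * (\sum_i p i * tau_pure (psi i)).
  move=> f hf.
  have e3 : \sum_i p i * (3 - 2 * tau_pure (psi i)) = 3 - 2 * (\sum_i p i * tau_pure (psi i)).
    rewrite (eq_bigr (fun i => 3 * p i + (- 2) * (p i * tau_pure (psi i)))); last by move=> i _; ring.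
    by rewrite big_split /= -!mulr_sumr hs; ring.
  rewrite -e3.
  apply: ler_sum => i _; apply: ler_wpM2l => //.
  have := hf i; lra.
split; last first.
  apply: sumr_ge0 => i _; apply: mulr_ge0 => //.
  by case: (pure_ineq (hu i)).
rewrite /Smax.
set x := \sum_i p i * tau_pure (psi i).
have hAB : Scorr (rhoAB (\sum_i (p i)%:C%C *: proj (psi i))) <= 3 - 2 * x.
  rewrite rhoAB_lin; apply: (le_trans (Scorr_convex _ hp hs)).
  by apply: key => i; case: (pure_ineq (hu i)).
have hAC : Scorr (rhoAC (\sum_i (p i)%:C%C *: proj (psi i))) <= 3 - 2 * x.
  rewrite rhoAC_lin; apply: (le_trans (Scorr_convex _ hp hs)).
  by apply: key => i; case: (pure_ineq (hu i)).
have hBC : Scorr (rhoBC (\sum_i (p i)%:C%C *: proj (psi i))) <= 3 - 2 * x.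
  rewrite rhoBC_lin; apply: (le_trans (Scorr_convex _ hp hs)).
  by apply: key => i; case: (pure_ineq (hu i)).
apply: (lin3 (y := 3 - 2 * x)) => //.
by rewrite !ge_max hAB hAC hBC.
Qed.
End Mixed.

Unset Implicit Arguments. Set Strict Implicit.

Theorem theorem4 (R : realType) (rho : 'M[R[i]]_8) :
  is_state rho -> Smax rho + 2 * tau rho <= 3.
Proof.
move=> st.
have [n [p [psi dec]]] := exists_decomp st.
have [h1 h2] := mixed_bound dec.
rewrite /tau.
set E := (X in inf X).
have xin : E (\sum_i p i * tau_pure (psi i)) by exists n, p, psi.
have lb : has_lbound E.
  exists 0 => x [m [q [phi [d ->]]]].
  by case: (mixed_bound d).
have := ge_inf lb xin.
move=> hi.
apply: (le_trans _ h1).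
by rewrite lerD2l ler_pM2l.
Qed.
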